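(* Let $F$ be a MaxSAT instance over $n$ variables with blocking variables $b_1,\dots,b_k$. If there is a $t$-step cost-SR calculus derivation of a set of clauses $\Gamma$ from $F$, then there is a veriPB proof, from $F$ with objective $f=\sum_{i=1}^k b_i$, of some set $\Gamma'\supseteq\Gamma$ in $\mathrm{poly}(nt)$ steps.
   Context: Substitutions map variables to $0$, $1$ or literals ($\sigma(\lnot x)=\lnot\sigma(x)$); $(\sigma\circ\tau)(x)=\sigma(\tau(x))$; total assignments assign Boolean values to all variables. $C{\upharpoonright}_\sigma$: apply $\sigma$ to the literals and simplify; $\Gamma{\upharpoonright}_\sigma$ is the multiset of $C{\upharpoonright}_\sigma\ne1$, $C\in\Gamma$. $\lnot C$ is the partial assignment falsifying all literals of $C$. $\Gamma\vdash_1 C$ means unit propagation on $\Gamma{\upharpoonright}_{\lnot C}$ derives the empty clause. $\mathrm{cost}(\alpha)=\sum_i\alpha(b_i)$. $C$ is cost-SR w.r.t. $\Gamma$ if there is a substitution $\sigma$ with (1) $\Gamma{\upharpoonright}_{\lnot C}\vdash_1(\Gamma\cup\{C\}){\upharpoonright}_\sigma$ and (2) $\mathrm{cost}(\tau\circ\sigma)\le\mathrm{cost}(\tau)$ for all total $\tau\supseteq\lnot C$. A $t$-step cost-SR calculus derivation from $F$ is a sequence $D_1,\dots,D_t$, each in $F$, or obtained from earlier clauses by weakening or resolution, or cost-SR w.r.t. $F\cup\{D_1,\dots,D_{i-1}\}$ with $\mathrm{Var}(D_i)\subseteq\mathrm{Var}(F)$; it derives the set of clauses of $F\cup\{D_1,\dots,D_t\}$.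 veriPB (the fragment used): clauses are encoded as linear inequalities, e.g. $x\lor y\lor\lnot z$ as $x+y+\bar z\ge1$, with formal negated variables $\bar x$; the Boolean axioms $0\le x\le1$ and $x+\bar x=1$ are available. The formal negation $\overline{C}$ of a clause encoded as $\sum\ell\ge1$ is $\sum\ell\le0$. A veriPB proof from $F$ with linear objective $f$ (to be minimized) starts from the encoding of $F$ and the Boolean axioms; at each step an inequality $C$ is added to the current set $\Gamma$ if either (i) $C$ follows from $\Gamma$ by a cutting planes rule, or (ii) there is a substitution $\sigma$ with $\Gamma\cup\{\overline C\}\vdash(\Gamma\cup\{C\}){\upharpoonright}_\sigma\cup\{f{\upharpoonright}_\sigma\le f\}$, where $\vdash$ denotes a cutting planes derivation that is included in the proof (unless it consists only of unit propagation steps or uses of Boolean axioms). *)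

(* Defs.v *)
From HB Require Import structures.
From mathcomp Require Import all_boot all_order all_algebra.
Set Implicit Arguments. Unset Strict Implicit. Unset Printing Implicit Defensive.
Import Order.TTheory GRing.Theory Num.Theory.
Local Open Scope ring_scope.

(* A literal is (x, true) = x or (x, false) = not x; variables are nats. *)
Definition lit := (nat * bool)%type.
Definition negl (l : lit) : lit := (l.1, ~~ l.2).
Definition clause := seq lit.
Definition cnf := seq clause.            (* multiset of clauses *)
Definition vars_clause (C : clause) : seq nat := map fst C.
Definition vars_cnf (F : cnf) : seq nat := flatten (map vars_clause F).

Inductive sval := SConst of bool | SLit of lit.
Definition subst := nat -> sval.

Definition subst_lit (s : subst) (l : lit) : sval :=
  match s l.1 with
  | SConst b => SConst (if l.2 then b else ~~ b)
  | SLit l' => SLit (if l.2 then l' else negl l')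
  end.

Definition sval_is_true (v : sval) : bool :=
  if v is SConst b then b else false.

(* C|_sigma : None stands for the constant 1 (satisfied clause); otherwise
   the literals left after removing those mapped to 0. *)
Definition restr_clause (s : subst) (C : clause) : option clause :=
  if has (fun l => sval_is_true (subst_lit s l)) C then None
  else Some (undup (pmap (fun l => if subst_lit s l is SLit l' then Some l'
                                   else None) C)).

Definition restr_cnf (s : subst) (G : cnf) : cnf := pmap (restr_clause s) G.

(* The partial assignment  not C  falsifying all literals of C, seen as a
   substitution (variables it does not assign are mapped to themselves). *)
Definition neg_assign (C : clause) : subst := fun x =>
  if (x, true) \in C then SConst false
  else if (x, false) \in C then SConst true
  else SLit (x, true).

Definition assign_lit (l : lit) : subst := fun x =>
  if x == l.1 then SConst l.2 else SLit (x, true).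

Inductive unit_prop : cnf -> Prop :=
| up_empty G : [::] \in G -> unit_prop G
| up_unit G l : [:: l] \in G -> unit_prop (restr_cnf (assign_lit l) G) ->
                unit_prop G.

Definition up_implies (G : cnf) (D : clause) : Prop :=
  unit_prop (restr_cnf (neg_assign D) G).

Definition assignment := nat -> bool.
Definition eval_lit (t : assignment) (l : lit) : bool :=
  if l.2 then t l.1 else ~~ t l.1.
Definition eval_sval (t : assignment) (v : sval) : bool :=
  match v with SConst b => b | SLit l => eval_lit t l end.
Definition comp_assign (t : assignment) (s : subst) : assignment :=
  fun x => eval_sval t (s x).
Definition cost (b : seq nat) (a : assignment) : nat := (\sum_(i <- b) a i)%N.
Definition extends_neg (t : assignment) (C : clause) : Prop :=
  forall l, l \in C -> eval_lit t l = false.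

Definition cost_SR (b : seq nat) (G : cnf) (C : clause) : Prop :=
  exists s : subst,
    (forall D, D \in restr_cnf s (rcons G C) ->
       up_implies (restr_cnf (neg_assign C) G) D) /\
    (forall t : assignment, extends_neg t C ->
       (cost b (comp_assign t s) <= cost b t)%N).

Definition resolvent_of (E1 E2 D : clause) : Prop :=
  exists x : nat, (x, true) \in E1 /\ (x, false) \in E2 /\
    D =i [seq l <- E1 | l != (x, true)] ++ [seq l <- E2 | l != (x, false)].

(* Justification of D given F and the previous clauses prev = D_1..D_{i-1}. *)
Definition csr_step (b : seq nat) (F : cnf) (prev : seq clause) (D : clause)
    : Prop :=
  D \in F
  \/ (exists E, E \in prev /\ {subset E <= D})
  \/ (exists E1 E2, E1 \in prev /\ E2 \in prev /\ resolvent_of E1 E2 D)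
  \/ (cost_SR b (F ++ prev) D /\ {subset vars_clause D <= vars_cnf F}).

Definition csr_derivation (b : seq nat) (F : cnf) (Ds : seq clause) : Prop :=
  forall i, (i < size Ds)%N -> csr_step b F (take i Ds) (nth [::] Ds i).

(* Pseudo-Boolean constraints  sum c_j l_j >= d  (l_j literals)        *)

Definition pbc := (seq (int * lit) * int)%type.
Definition pb_terms (c : pbc) := c.1.
Definition pb_deg (c : pbc) := c.2.

Definition enc_clause (C : clause) : pbc := ([seq (1%:Z, l) | l <- undup C], 1).
Definition enc_cnf (F : cnf) : seq pbc := map enc_clause F.

(* formal negation: sum c l >= d  becomes  sum c l <= d - 1 *)
Definition pb_neg (c : pbc) : pbc := ([seq (- t.1, t.2) | t <- c.1], 1 - c.2).

Definition pb_coef (c : pbc) (l : lit) : int := \sum_(t <- c.1 | t.2 == l) t.1.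
Definition pb_equiv (c1 c2 : pbc) : Prop :=
  c1.2 = c2.2 /\ forall l, pb_coef c1 l = pb_coef c2 l.

(* Boolean axioms: 0 <= l <= 1 for every literal l, and x + ~x = 1 *)
Definition bool_axiom (c : pbc) : Prop :=
  (exists l : lit, c = ([:: (1, l)], 0) \/ c = ([:: (-1, l)], -1))
  \/ (exists x : nat, c = ([:: (1, (x, true)); (1, (x, false))], 1)
                   \/ c = ([:: (-1, (x, true)); (-1, (x, false))], -1)).

Definition pb_add (c1 c2 : pbc) : pbc := (c1.1 ++ c2.1, c1.2 + c2.2).
Definition pb_mul (k : nat) (c : pbc) : pbc :=
  ([seq (t.1 * k%:Z, t.2) | t <- c.1], c.2 * k%:Z).
Definition ceil_div (a : int) (k : nat) : int := - ((- a) %/ k%:Z)%Z.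
Definition pb_div (k : nat) (c : pbc) : pbc :=
  ([seq (ceil_div t.1 k, t.2) | t <- c.1], ceil_div c.2 k).

(* c follows from the pool P (plus Boolean axioms) by one cutting planes rule
   (the first alternative also allows rewriting into an equivalent form) *)
Definition cp_rule (P : seq pbc) (c : pbc) : Prop :=
  let avail a := a \in P \/ bool_axiom a in
  (exists a, avail a /\ pb_equiv c a)
  \/ (exists a1 a2, avail a1 /\ avail a2 /\ c = pb_add a1 a2)
  \/ (exists (k : nat) a, (0 < k)%N /\ avail a /\ c = pb_mul k a)
  \/ (exists (k : nat) a, (0 < k)%N /\ avail a /\ c = pb_div k a).

Definition cp_derivation (G : seq pbc) (L : seq pbc) : Prop :=
  forall i, (i < size L)%N -> cp_rule (G ++ take i L) (nth ([::], 0) L i).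
Definition cp_derives (L : seq pbc) (D : pbc) : Prop :=
  exists a, a \in L /\ pb_equiv a D.

(* Pseudo-Boolean unit propagation under a partial assignment rho (the list of
   literals set to true). *)
Definition pval (rho : seq lit) (l : lit) : option bool :=
  if l \in rho then Some true else if negl l \in rho then Some false else None.
Definition maxval (rho : seq lit) (c : pbc) : int :=
  \sum_(t <- c.1) match pval rho t.2 with
                  | Some true => t.1
                  | Some false => 0
                  | None => Num.max t.1 0
                  end.
Inductive pb_up (G : seq pbc) : seq lit -> Prop :=
| pbup_conflict rho c : c \in G -> maxval rho c < c.2 -> pb_up G rho
| pbup_prop rho c l : c \in G -> pval rho l = None ->
    maxval (negl l :: rho) c < c.2 -> pb_up G (l :: rho) -> pb_up G rho.
Definition pb_rup (G : seq pbc) (D : pbc) : Prop := pb_up (pb_neg D :: G) [::].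

(* Steps not counted in the proof: D is a premise, a Boolean axiom, or follows
   by unit propagation. *)
Definition free_ok (G : seq pbc) (D : pbc) : Prop :=
  (exists a, a \in G /\ pb_equiv a D) \/ bool_axiom D \/ pb_rup G D.

(* restriction of a PB constraint by a substitution (constants moved to the
   right-hand side) *)
Definition restr_pb (s : subst) (c : pbc) : pbc :=
  (flatten [seq (if subst_lit s t.2 is SLit l' then [:: (t.1, l')] else [::])
           | t <- c.1],
   c.2 - \sum_(t <- c.1) (if subst_lit s t.2 is SConst bb
                          then t.1 * (nat_of_bool bb)%:Z else 0)).

(* objective f = sum_i b_i and the constraint  f|_sigma <= f,
   written  f - (f|_sigma without constants) >= constant part of f|_sigma *)
Definition objective (b : seq nat) : pbc := ([seq (1%:Z, (x, true)) | x <- b], 0).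
Definition obj_con (b : seq nat) (s : subst) : pbc :=
  let r := restr_pb s (objective b) in
  ((objective b).1 ++ [seq (- t.1, t.2) | t <- r.1], - r.2).

(* redundance step adding C to Gamma, with total counted size k
   (1 + the lengths of the included cutting planes subderivations) *)
Definition red_step (b : seq nat) (Gamma : seq pbc) (C : pbc) (k : nat) : Prop :=
  exists s : subst,
    let G := pb_neg C :: Gamma in
    let req := rcons [seq restr_pb s d | d <- rcons Gamma C] (obj_con b s) in
    exists lens : seq nat,
      size lens = size req /\ k = (1 + sumn lens)%N /\
      forall i, (i < size req)%N ->
        free_ok G (nth ([::], 0) req i)
        \/ exists L, cp_derivation G L /\ cp_derives L (nth ([::], 0) req i)
                     /\ size L = nth 0%N lens i.

Definition pb_step (b : seq nat) (Gamma : seq pbc) (C : pbc) (k : nat) : Prop :=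
  (cp_rule Gamma C /\ k = 1%N) \/ red_step b Gamma C k.

(* a veriPB proof from F with objective sum_i b_i: the list of added
   constraints with the counted size of each step *)
Definition veripb_proof (b : seq nat) (F : cnf) (steps : seq (pbc * nat)) : Prop :=
  forall i, (i < size steps)%N ->
    pb_step b (enc_cnf F ++ map fst (take i steps))
            (nth (([::], 0), 0%N) steps i).1 (nth (([::], 0), 0%N) steps i).2.
Definition proof_length (steps : seq (pbc * nat)) : nat := sumn (map snd steps).
Definition proof_result (F : cnf) (steps : seq (pbc * nat)) : seq pbc :=
  enc_cnf F ++ map fst steps.

(* Main.v *)
Require Import Defs.
From HB Require Import structures.
From mathcomp Require Import all_boot all_order all_algebra.
From mathcomp Require Import zify ring lra.
Set Implicit Arguments. Unset Strict Implicit. Unset Printing Implicit Defensive.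
Import Order.TTheory GRing.Theory Num.Theory.
Open Scope ring_scope.

Lemma neglK l : negl (negl l) = l.
Proof. by case: l => x []. Qed.
Lemma negl_neq l : negl l != l.
Proof. by case: l => x [] /=; rewrite /negl /= xpair_eqE eqxx. Qed.
Lemma negl_inj : injective negl.
Proof. by move=> a b H; rewrite -(neglK a) H neglK. Qed.

Lemma pb_coef_add c1 c2 l : pb_coef (pb_add c1 c2) l = pb_coef c1 l + pb_coef c2 l.
Proof. by rewrite /pb_coef big_cat. Qed.
Lemma pb_coef_mul k c l : pb_coef (pb_mul k c) l = pb_coef c l * k%:Z.
Proof. by rewrite /pb_coef big_map /= mulr_suml. Qed.
Lemma pb_coef_nil d l : pb_coef ([::], d) l = 0.
Proof. by rewrite /pb_coef big_nil. Qed.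

Lemma pb_equiv_refl c : pb_equiv c c.
Proof. by []. Qed.

Lemma cp_rule_mono P P' c : {subset P <= P'} -> cp_rule P c -> cp_rule P' c.
Proof.
move=> sub; rewrite /cp_rule /=.
have av : forall a, a \in P \/ bool_axiom a -> a \in P' \/ bool_axiom a.
  by move=> a [H|H]; [left; apply: sub|right].
case=> [[a [Ha E]]|[[a1 [a2 [H1 [H2 E]]]]|[[k [a [k0 [Ha E]]]]|[k [a [k0 [Ha E]]]]]]].
- by left; exists a; split => //; apply: av.
- by right; left; exists a1, a2; split; [apply: av|split; [apply: av|]].
- by right; right; left; exists k, a; split => //; split => //; apply: av.
- by right; right; right; exists k, a; split => //; split => //; apply: av.
Qed.

Lemma cp_derivation_nil P : cp_derivation P [::].
Proof. by []. Qed.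

Lemma cp_derivation_cons P x L :
  cp_rule P x -> cp_derivation (rcons P x) L -> cp_derivation P (x :: L).
Proof.
move=> Hx HL [|i] /= Hi; first by rewrite cats0.
by rewrite -cat_rcons; apply: HL.
Qed.

Definition Z0 : pbc := ([::], 0).

Lemma mul_ok P k a : bool_axiom a -> Z0 \in P -> cp_rule P (pb_mul k a).
Proof.
move=> ba z0; case: k => [|k].
  left; exists Z0; split; first by left.
  split; first by rewrite /= mulr0.
  by move=> l; rewrite pb_coef_mul mulr0 pb_coef_nil.
by right; right; left; exists k.+1, a; split => //; split => //; right.
Qed.

Lemma mul_ok2 P k a : a \in P -> (0 < k)%N -> cp_rule P (pb_mul k a).
Proof. by move=> Ha k0; right; right; left; exists k, a; split => //; split => //; left. Qed.

Lemma add_ok P a1 a2 : a1 \in P -> a2 \in P -> cp_rule P (pb_add a1 a2).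
Proof. by move=> H1 H2; right; left; exists a1, a2; split; [left|split; [left|]]. Qed.

Definition negc (ls : seq lit) : pbc := ([seq (-1, l) | l <- ls], 0).
Definition posc (ls : seq lit) (d : int) : pbc := ([seq (1, l) | l <- ls], d).

Lemma maxval_negc rho ls d :
  maxval rho ([seq (-1, l) | l <- ls], d) = - (count (mem rho) ls)%:Z.
Proof.
rewrite /maxval big_map /=; elim: ls => [|l ls IH]; first by rewrite big_nil.
rewrite big_cons IH /= /pval; case: (l \in rho) => /=; first by lia.
by case: (negl l \in rho) => //=; rewrite add0r.
Qed.

Lemma maxval_posc rho ls d :
  maxval rho ([seq (1, l) | l <- ls], d) =
  (count (fun l => pval rho l != Some false) ls)%:Z.
Proof.
rewrite /maxval big_map /=; elim: ls => [|l ls IH]; first by rewrite big_nil.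
rewrite big_cons IH /= /pval; case: (l \in rho) => /=; first by lia.
by case: (negl l \in rho) => //=; rewrite ?add0r //; lia.
Qed.

Definition consistent (rho : seq lit) := forall l, l \in rho -> negl l \notin rho.

Lemma pval_false rho l : l \notin rho -> negl l \in rho -> pval rho l = Some false.
Proof. by rewrite /pval => /negPf -> ->. Qed.

Lemma count_false rho ls :
  (forall l, l \in ls -> pval rho l = Some false) ->
  count (fun l => pval rho l != Some false) ls = 0%N.
Proof.
move=> H; apply/eqP; rewrite -leqn0 leqNgt -has_count; apply/hasP => -[l /H ->].
by [].
Qed.

Lemma phase P ls' ls : negc ls' \in P -> {subset ls <= ls'} ->
  forall rho, consistent rho ->
  (forall rho', consistent rho' -> {subset rho <= rho'} ->
     {subset rho' <= rho ++ map negl ls} ->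
     (forall l, l \in ls -> negl l \in rho') -> pb_up P rho') ->
  pb_up P rho.
Proof.
move=> inP; elim: ls => [|l ls IH] sub rho crho cont.
  by apply: cont => // x; rewrite cats0.
have sub' : {subset ls <= ls'} by move=> x xin; apply: sub; rewrite inE xin orbT.
have lin : l \in ls' by apply: sub; rewrite inE eqxx.
case E: (pval rho l) => [[]|].
- have lr : l \in rho by move: E; rewrite /pval; case: (l \in rho) => //; case: (negl l \in rho).
  apply: (pbup_conflict inP); rewrite /negc maxval_negc /=.
  have : (0 < count (mem rho) ls')%N by rewrite -has_count; apply/hasP; exists l.
  by rewrite oppr_lt0 ltz_nat.
- have [lr nlr] : l \notin rho /\ negl l \in rho.
    by move: E; rewrite /pval; case: (l \in rho) => //; case: (negl l \in rho).
  apply: (IH sub' rho crho) => rho' c' s1 s2 all'; apply: cont => //.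
  + move=> x /s2; rewrite !mem_cat /= inE; case/orP => ->; rewrite ?orbT //.
  + move=> x; rewrite inE; case/orP => [/eqP -> |]; [by apply: s1|by apply: all'].
- have [lr nlr] : l \notin rho /\ negl l \notin rho.
    by move: E; rewrite /pval; case: (l \in rho) => //; case: (negl l \in rho).
  apply: (@pbup_prop P rho (negc ls') (negl l)) => //.
  + by rewrite /pval neglK (negbTE nlr) (negbTE lr).
  + rewrite neglK /negc maxval_negc /=.
    have : (0 < count (mem (l :: rho)) ls')%N
      by rewrite -has_count; apply/hasP; exists l => //; exact: mem_head.
    by rewrite oppr_lt0 ltz_nat.
  apply: (IH sub').
  + move=> x; rewrite !inE => /orP [/eqP ->|xr].
      by rewrite neglK negb_or lr eq_sym negl_neq.
    rewrite negb_or (crho x xr) andbT; apply/eqP => ex.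
    by move: lr; rewrite -(negl_inj ex) xr.
  + move=> rho' c' s1 s2 all'; apply: cont => //.
    * by move=> x xr; apply: s1; rewrite inE xr orbT.
    * move=> x /s2; rewrite !mem_cat /= !inE; case/orP => [/orP [->|->]|->];
        rewrite ?orbT //.
    * move=> x; rewrite inE; case/orP => [/eqP ->|]; last by apply: all'.
      by apply: s1; rewrite inE eqxx.
Qed.

Lemma pval_None rho l : (pval rho l = None) <-> (l \notin rho /\ negl l \notin rho).
Proof.
rewrite /pval; case: (l \in rho) => /=; first by split => // -[]. case: (negl l \in rho) => /=; by split => // -[].

Qed.

Lemma same_var (l0 l : lit) : l0.1 == l.1 -> (l0 = l) \/ (l0 = negl l).
Proof.
case: l0 l => [x b] [y c] /= /eqP ->; case: b; case: c; rewrite /negl /=; tauto.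
Qed.

Lemma negl_var l : (negl l).1 = l.1. Proof. by []. Qed.

Lemma subst_assign l l0 : subst_lit (assign_lit l) l0 =
  if l0.1 == l.1 then SConst (if l0.2 then l.2 else ~~ l.2) else SLit l0.
Proof.
case: l0 => x b; rewrite /subst_lit /assign_lit /=.
by case: (x == l.1) => //; case: b.
Qed.

Lemma restr_assign l E E'' : restr_clause (assign_lit l) E = Some E'' ->
  l \notin E /\ forall l0, (l0 \in E'') = (l0 \in E) && (l0.1 != l.1).
Proof.
rewrite /restr_clause; case: ifP => // hasF [<-]; split.
  apply/negP => lE; move/negP: hasF; apply; apply/hasP; exists l => //.
  by rewrite subst_assign eqxx; case: (l.2).
move=> l0; rewrite mem_undup mem_pmap; apply/mapP/andP.
  case=> l1 l1E; rewrite subst_assign; case: ifP => //= h [->].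
  by rewrite l1E h.
case=> l0E h; exists l0 => //; rewrite subst_assign (negbTE h) //.
Qed.

Lemma subst_neg C l : subst_lit (neg_assign C) l =
  if (l.1, true) \in C then SConst (~~ l.2)
  else if (l.1, false) \in C then SConst l.2 else SLit l.
Proof.
case: l => x b; rewrite /subst_lit /neg_assign /=.
by case: ((x,true) \in C); case: ((x,false) \in C); case: b.
Qed.

Lemma restr_neg C E E1 : restr_clause (neg_assign C) E = Some E1 ->
  (forall l, l \in E -> (l \in C) \/ (l \in E1)) /\
  (forall l, l \in E1 -> [/\ l \in E, (l.1,true) \notin C & (l.1,false) \notin C]).
Proof.
rewrite /restr_clause; case: ifP => // hasF [<-]; split.
  move=> [x b] lE.
  have nt : ~~ sval_is_true (subst_lit (neg_assign C) (x,b)).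
    by apply/negP => h; move/negP: hasF; apply; apply/hasP; exists (x,b).
  move: nt; rewrite subst_neg /=.
  case h1: ((x,true) \in C); first by case: b lE => //= lE _; left.
  case h2: ((x,false) \in C); first by case: b lE => //= lE _; left.
  by move=> _; right; rewrite mem_undup mem_pmap; apply/mapP; exists (x,b) => //;
    rewrite subst_neg /= h1 h2.
move=> l; rewrite mem_undup mem_pmap => /mapP [l1 l1E].
rewrite subst_neg; case: ifP => //; case: ifP => // h2 h1 [->].
by rewrite l1E h1 h2.
Qed.

Lemma maxval_enc rho E :
  maxval rho (enc_clause E) = (count (fun l => pval rho l != Some false) (undup E))%:Z.
Proof. exact: maxval_posc. Qed.

Lemma enc_zero rho E : (forall l, l \in E -> pval rho l = Some false) ->
  maxval rho (enc_clause E) = 0.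
Proof.
move=> H; rewrite maxval_enc count_false // => l; rewrite mem_undup; exact: H.
Qed.

Definition Corr (Gcl : cnf) (H : cnf) (rho : seq lit) :=
  forall E', E' \in H -> (forall l, l \in E' -> pval rho l = None) /\
    exists E, E \in Gcl /\ forall l, l \in E -> (l \in E') || (negl l \in rho).

Lemma up_sim Gcl P : (forall E, E \in Gcl -> enc_clause E \in P) ->
  forall H, unit_prop H -> forall rho, consistent rho -> Corr Gcl H rho -> pb_up P rho.
Proof.
move=> GP H up; elim: up => {H} [H e0|H l l1 _ IH] rho crho cr.
  have [_ [E [EG HE]]] := cr _ e0.
  apply: (pbup_conflict (GP _ EG)); rewrite enc_zero //= => l0 /HE /= nl.
  by apply: pval_false => //; move: (crho _ nl); rewrite neglK.
have [Nl [E [EG HE]]] := cr _ l1.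
have /pval_None [lr nlr] := Nl l (mem_head _ _).
apply: (pbup_prop (GP _ EG) (Nl l (mem_head _ _))).
  rewrite enc_zero //= => l0 /HE; rewrite inE; case/orP => [/eqP ->|nl].
    apply: pval_false; last by rewrite inE eqxx.
    by rewrite inE negb_or lr eq_sym negl_neq.
  apply: pval_false; last by rewrite inE nl orbT.
  rewrite inE negb_or; move: (crho _ nl); rewrite neglK => ->; rewrite andbT.
  by apply/eqP => e; move: nl; rewrite e neglK (negbTE lr).
apply: IH.
  move=> x; rewrite !inE => /orP [/eqP ->|xr].
    by rewrite (negbTE (negl_neq l)) (negbTE nlr).
  rewrite negb_or (crho x xr) andbT; apply/eqP => ex.
  by move: nlr; rewrite -ex neglK xr.
move=> E'' /=; rewrite mem_pmap => /mapP [E' E'H] /esym /restr_assign [lE' memE''].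
have [NE' [E0 [E0G HE0]]] := cr _ E'H.
split.
  move=> l0; rewrite memE'' => /andP [l0E' vne].
  have /pval_None [h1 h2] := NE' _ l0E'.
  apply/pval_None; rewrite !inE !negb_or h1 h2 !andbT; split.
    by apply/eqP => e; move: vne; rewrite e eqxx.
  by apply/eqP => e; move: vne; rewrite -(negl_var l0) e eqxx.
exists E0; split => // l0 /HE0 /orP [l0E'|nl]; last by rewrite inE nl !orbT.
rewrite memE'' l0E' /=; case: (eqVneq l0.1 l.1) => [/eqP|] vq //=.
case: (same_var vq) => e; first by move: lE'; rewrite -e l0E'.
by rewrite e neglK inE eqxx.
Qed.

Definition fs (s : subst) (l : lit) : option lit :=
  if subst_lit s l is SLit l' then Some l' else None.

Lemma restr_pb_terms s E :
  (restr_pb s (enc_clause E)).1 = [seq (1, l') | l' <- pmap (fs s) (undup E)].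
Proof.
rewrite /restr_pb /enc_clause /=; elim: (undup E) => //= l ls IH.
by rewrite IH /fs; case: subst_lit.
Qed.

Lemma restr_pb_deg s E : (restr_pb s (enc_clause E)).2 =
  1 - (count (fun l => sval_is_true (subst_lit s l)) (undup E))%:Z.
Proof.
rewrite /restr_pb /enc_clause /= big_map; congr (_ - _).
elim: (undup E) => [|l ls IH]; first by rewrite big_nil.
rewrite big_cons IH /=; case: subst_lit => [[]|] //=; rewrite ?mul1r //; lia.
Qed.

Lemma pb_neg_pos ls d : pb_neg ([seq (1, l) | l <- ls], d) = ([seq (-1, l) | l <- ls], 1 - d).
Proof. by rewrite /pb_neg /= -map_comp. Qed.

Lemma pb_neg_enc C : pb_neg (enc_clause C) = negc (undup C).
Proof. by rewrite /enc_clause pb_neg_pos subrr. Qed.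

Lemma not_both (X : seq lit) (l l1 : lit) : l1 \in X -> (l.1,true) \notin X ->
  (l.1,false) \notin X -> l1.1 = l.1 -> False.
Proof.
case: l1 => x [] /= h1 h2 h3 e; subst x.
  by rewrite h1 in h2. by rewrite h1 in h3.
Qed.

Lemma sr_entry s C Gcl Gamma E :
  (forall E0, E0 \in Gcl -> enc_clause E0 \in Gamma) ->
  (forall E'', restr_clause s E = Some E'' ->
     up_implies (restr_cnf (neg_assign C) Gcl) E'') ->
  free_ok (pb_neg (enc_clause C) :: Gamma) (restr_pb s (enc_clause E)).
Proof.
move=> GG Hup; right; right; rewrite /pb_rup.
set r := restr_pb s (enc_clause E).
have nr : pb_neg r = ([seq (-1, l) | l <- pmap (fs s) (undup E)],
                       (count (fun l => sval_is_true (subst_lit s l)) (undup E))%:Z).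
  by rewrite /pb_neg /r restr_pb_terms restr_pb_deg -map_comp /=; congr (_, _); lia.
case Er: (restr_clause s E) => [E''|]; last first.
  move: Er; rewrite /restr_clause; case: ifP => // hasT _.
  apply: (pbup_conflict (c := pb_neg r)); first exact: mem_head.
  rewrite nr maxval_negc /=.
  have : (0 < count (fun l => sval_is_true (subst_lit s l)) (undup E))%N.
    by rewrite -has_count; move/hasP: hasT => [l lE h]; apply/hasP; exists l;
      rewrite ?mem_undup.
  have -> : count (mem [::]) (pmap (fs s) (undup E)) = 0%N.
    by elim: (pmap _ _).
  by rewrite oppr0 ltz_nat.
have E''def : E'' = undup (pmap (fs s) E).
  by move: Er; rewrite /restr_clause; case: ifP => // _ [<-].
have ncnt : count (fun l => sval_is_true (subst_lit s l)) (undup E) = 0%N.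
  move: Er; rewrite /restr_clause; case: ifP => // hasF _.
  apply/eqP; rewrite -leqn0 leqNgt -has_count; apply/negP => /hasP [l lE h].
  by move/negP: hasF; apply; apply/hasP; exists l; rewrite // -mem_undup.
have nr' : pb_neg r = negc (pmap (fs s) (undup E)) by rewrite nr ncnt.
set P := pb_neg r :: pb_neg (enc_clause C) :: Gamma.
have inC : negc (undup C) \in P by rewrite -pb_neg_enc !inE eqxx orbT.
have inE' : negc (pmap (fs s) (undup E)) \in P by rewrite -nr' mem_head.
apply: (phase inC (fun x (h : x \in undup C) => h)) => // rho1 c1 _ s1 a1.
have subE : {subset E'' <= pmap (fs s) (undup E)}.
  by move=> x; rewrite E''def mem_undup !mem_pmap => /mapP [y yE ->];
    apply/mapP; exists y => //; rewrite mem_undup.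
apply: (phase inE' subE c1) => rho2 c2 s21 s22 a2.
have Hu := Hup _ Er; rewrite /up_implies in Hu.
have GP : forall E0, E0 \in Gcl -> enc_clause E0 \in P.
  by move=> E0 /GG h; rewrite !inE h !orbT.
apply: (up_sim GP Hu c2) => E' /=.
rewrite mem_pmap => /mapP [E1 E1H /esym EE1].
move: E1H; rewrite mem_pmap => /mapP [E0 E0G /esym EE0].
have [A1 B1] := restr_neg EE1; have [A0 B0] := restr_neg EE0.
split.
  move=> l lE'; have [lE1 nt1 nf1] := B1 _ lE'; have [lE0 nt0 nf0] := B0 _ lE1.
  apply/pval_None; split; apply/negP => /s22; rewrite mem_cat => /orP [/s1|];
    rewrite /= ?cats0 => /mapP [l1 l1in e].
  - apply: (@not_both C l l1) => //; first by rewrite -mem_undup.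
    by rewrite e.
  - by apply: (@not_both E'' l l1) => //; rewrite e.
  - apply: (@not_both C l l1) => //; first by rewrite -mem_undup.
    by rewrite -(negl_inj e).
  - by apply: (@not_both E'' l l1) => //; rewrite -(negl_inj e).
exists E0; split => // l /A0 [lC|/A1 [lE''|->//]].
  by rewrite s21 ?orbT // a1 // mem_undup.
by rewrite a2 ?orbT.
Qed.

Definition idsub : subst := fun x => SLit (x, true).

Lemma subst_id l : subst_lit idsub l = SLit l.
Proof. by case: l => x []. Qed.

Lemma restr_pb_id c : restr_pb idsub c = c.
Proof.
case: c => ts d; rewrite /restr_pb /=; congr (_, _).
  by elim: ts => //= t ts ->; case: t => a [x []].
by rewrite big1 ?subr0 // => t _; rewrite subst_id.
Qed.

Definition l00 : lit := (0%N, true).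
Definition z1 : pbc := pb_add ([:: (1, l00)], 0) ([:: (-1, l00)], -1).
Definition z2 : pbc := ([::], -1).
Definition L0 : seq pbc := [:: z1; z2; pb_div 2 z2].

Lemma z3E : pb_div 2 z2 = Z0.
Proof. by rewrite /pb_div /z2 /ceil_div /=. Qed.

Lemma pb_coef1 (a : int) l0 l : pb_coef ([:: (a, l0)], 0) l = if l0 == l then a else 0.
Proof. by rewrite /pb_coef big_cons big_nil /=; case: (l0 == l) => //; rewrite addr0. Qed.

Lemma L0_deriv P : cp_derivation P L0.
Proof.
apply: cp_derivation_cons.
  right; left; exists ([:: (1, l00)], 0), ([:: (-1, l00)], -1).
  by split; [right; left; exists l00; left|split; [right; left; exists l00; right|]].
apply: cp_derivation_cons.
  left; exists z1; split; first by left; rewrite mem_rcons mem_head.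
  split => // l; rewrite pb_coef_nil /z1 pb_coef_add pb_coef1.
  rewrite /pb_coef big_cons big_nil /=; case: (l00 == l) => //.
apply: cp_derivation_cons; last exact: cp_derivation_nil.
right; right; right; exists 2%N, z2; split => //; split => //.
by left; rewrite mem_rcons mem_head.
Qed.

Lemma L0_mem P x : x \in L0 -> x \in P ++ L0.
Proof. by move=> h; rewrite mem_cat h orbT. Qed.

Lemma pb_coef_negmap ts l :
  pb_coef ([seq (- t.1, t.2) | t <- ts], 0) l = - pb_coef (ts, 0) l.
Proof. by rewrite /pb_coef big_map /= sumrN. Qed.

Lemma obj_id_equiv b : pb_equiv Z0 (obj_con b idsub).
Proof.
rewrite /obj_con restr_pb_id; split; first by rewrite /= oppr0.
move=> l; rewrite pb_coef_nil /pb_coef /= big_cat /= big_map /= sumrN.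
by rewrite subrr.
Qed.

Lemma red_step_of b Gamma C s m :
  (forall d, d \in rcons Gamma C -> free_ok (pb_neg C :: Gamma) (restr_pb s d)) ->
  (exists L, cp_derivation (pb_neg C :: Gamma) L /\ cp_derives L (obj_con b s) /\ size L = m) ->
  red_step b Gamma C (1 + m)%N.
Proof.
move=> Hf [L [HL [HD HS]]]; exists s.
exists (rcons (nseq (size Gamma).+1 0%N) m); split.
  by rewrite !size_rcons size_map size_rcons size_nseq.
split; first by rewrite -cats1 sumn_cat sumn_nseq /=; lia.
move=> i; rewrite size_rcons size_map size_rcons ltnS => hi.
rewrite [nth _ (rcons [seq _ | _ <- _] _) _]nth_rcons size_map size_rcons.
case: ltnP => hi2.
  left; rewrite (nth_map ([::], 0)) ?size_rcons //.
  by apply: Hf; apply: mem_nth; rewrite size_rcons.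
have -> : i = (size Gamma).+1 by apply/eqP; rewrite eqn_leq hi hi2.
rewrite eqxx; right; exists L; split => //; split => //.
by rewrite nth_rcons size_nseq ltnn eqxx.
Qed.

Lemma id_step b Gamma D : pb_rup (pb_neg (enc_clause D) :: Gamma) (enc_clause D) ->
  red_step b Gamma (enc_clause D) 4.
Proof.
move=> Hr; apply: (red_step_of (s := idsub)).
  move=> d; rewrite restr_pb_id mem_rcons inE => /orP [/eqP ->|dG].
    by right; right.
  by left; exists d; split => //; rewrite inE dG orbT.
exists L0; split; first exact: L0_deriv.
split => //; exists (pb_div 2 z2); split; first by rewrite !inE eqxx !orbT.
rewrite z3E; exact: obj_id_equiv.
Qed.

Lemma rup_base D Gamma :
  (forall rho, consistent rho -> (forall l, l \in D -> negl l \in rho) ->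
     pb_up (pb_neg (enc_clause D) :: pb_neg (enc_clause D) :: Gamma) rho) ->
  pb_rup (pb_neg (enc_clause D) :: Gamma) (enc_clause D).
Proof.
move=> cont; rewrite /pb_rup.
have inC : negc (undup D) \in pb_neg (enc_clause D) :: pb_neg (enc_clause D) :: Gamma.
  by rewrite -pb_neg_enc mem_head.
apply: (phase inC (fun x (h : x \in undup D) => h)) => // rho c _ _ a.
by apply: cont => // l lD; apply: a; rewrite mem_undup.
Qed.

Lemma rup_taut D Gamma l : l \in D -> negl l \in D ->
  pb_rup (pb_neg (enc_clause D) :: Gamma) (enc_clause D).
Proof.
move=> h1 h2; apply: rup_base => rho c a.
by move: (c _ (a _ h2)); rewrite neglK a.
Qed.

Lemma pfalse rho l : consistent rho -> negl l \in rho -> pval rho l = Some false.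
Proof. by move=> c h; apply: pval_false => //; move: (c _ h); rewrite neglK. Qed.

Lemma rup_weak D Gamma E : enc_clause E \in Gamma -> {subset E <= D} ->
  pb_rup (pb_neg (enc_clause D) :: Gamma) (enc_clause D).
Proof.
move=> EG sub; apply: rup_base => rho c a.
apply: (pbup_conflict (c := enc_clause E)); first by rewrite !inE EG !orbT.
by rewrite enc_zero // => l /sub /a /(pfalse c) ->.
Qed.

Lemma rup_res D Gamma E1 E2 : enc_clause E1 \in Gamma -> enc_clause E2 \in Gamma ->
  resolvent_of E1 E2 D ->
  pb_rup (pb_neg (enc_clause D) :: Gamma) (enc_clause D).
Proof.
move=> h1 h2 [x [x1 [x2 HD]]]; apply: rup_base => rho c a.
have in1 : enc_clause E1 \in pb_neg (enc_clause D) :: pb_neg (enc_clause D) :: Gamma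
  by rewrite !inE h1 !orbT.
have in2 : enc_clause E2 \in pb_neg (enc_clause D) :: pb_neg (enc_clause D) :: Gamma
  by rewrite !inE h2 !orbT.
have D1 : forall l, l \in E1 -> l != (x, true) -> l \in D.
  by move=> l lE ne; rewrite HD mem_cat mem_filter ne lE.
have D2 : forall l, l \in E2 -> l != (x, false) -> l \in D.
  by move=> l lE ne; rewrite HD mem_cat !mem_filter ne lE orbT.
case E: (pval rho (x, true)) => [[]|].
- have xr : (x, true) \in rho by move: E; rewrite /pval; case: ifP => //; case: ifP.
  apply: (pbup_conflict in2); rewrite enc_zero // => l lE.
  case: (eqVneq l (x, false)) => [->|ne]; last exact: pfalse c (a _ (D2 _ lE ne)).
  by apply: pfalse.
- apply: (pbup_conflict in1); rewrite enc_zero // => l lE.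
  case: (eqVneq l (x, true)) => [->|ne] //; exact: pfalse c (a _ (D1 _ lE ne)).
- have /pval_None [xr nxr] := E.
  apply: (pbup_prop in1 E).
    rewrite enc_zero // => l lE; case: (eqVneq l (x, true)) => [->|ne].
      apply: pval_false; last exact: mem_head.
      by rewrite inE negb_or xr eq_sym (negbTE (negl_neq _)).
    have nl := a _ (D1 _ lE ne); apply: pval_false; last by rewrite inE nl orbT.
    rewrite inE negb_or; move: (c _ nl); rewrite neglK => ->; rewrite andbT.
    by apply/eqP => e; move: nl; rewrite e neglK (negbTE xr).
  apply: (pbup_conflict in2); rewrite enc_zero // => l lE.
  case: (eqVneq l (x, false)) => [->|ne].
    apply: pval_false; last exact: mem_head.
    by rewrite inE negb_or nxr andbT; apply/eqP; case.
  have nl := a _ (D2 _ lE ne); apply: pval_false; last by rewrite inE nl orbT.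
  rewrite inE negb_or; move: (c _ nl); rewrite neglK => ->; rewrite andbT.
  by apply/eqP => e; move: nl; rewrite e /= (negbTE nxr).
Qed.

Section Loop.
Variables p q : nat -> int.
Definition mm v := Num.min (p v) (q v).
Definition PP v : pbc := ([:: (1, (v, true)); (1, (v, false))], 1).
Definition NP v : pbc := ([:: (-1, (v, true)); (-1, (v, false))], -1).
Definition x1 v := pb_mul `|mm v|%N (if 0 <= mm v then PP v else NP v).
Definition x2 v := pb_mul `|p v - mm v|%N ([:: (1, (v, true))], 0).
Definition x3 v := pb_mul `|q v - mm v|%N ([:: (1, (v, false))], 0).
Definition x4 v := pb_add (x1 v) (x2 v).
Definition atom v := pb_add (x4 v) (x3 v).
Definition acoef v (l : lit) : int :=
  if l == (v, true) then p v else if l == (v, false) then q v else 0.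

Lemma atom_deg v : (atom v).2 = mm v.
Proof.
rewrite /atom /x4 /x1 /x2 /x3 /=; case: ifP => h /=; lia.
Qed.

Lemma pb_coef2 (a : int) v l :
  pb_coef ([:: (a, (v, true)); (a, (v, false))], 0) l =
  (if (v, true) == l then a else 0) + (if (v, false) == l then a else 0).
Proof. by rewrite /pb_coef !big_cons big_nil /=; case: ifP; case: ifP => //; lia. Qed.

Lemma atom_coef v l : pb_coef (atom v) l = acoef v l.
Proof.
rewrite /atom /x4 /x1 /x2 /x3 !pb_coef_add !pb_coef_mul.
have e1 : pb_coef ([:: (1, (v, true))], 0) l = if (v, true) == l then 1 else 0
  by rewrite pb_coef1.
have e2 : pb_coef ([:: (1, (v, false))], 0) l = if (v, false) == l then 1 else 0
  by rewrite pb_coef1.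
rewrite e1 e2.
have e3 : pb_coef (if 0 <= mm v then PP v else NP v) l * (`|mm v|%N)%:Z =
   ((if (v, true) == l then mm v else 0) + (if (v, false) == l then mm v else 0)).
  case: ifP => h.
    rewrite /PP (_ : pb_coef _ l = pb_coef ([:: (1, (v, true)); (1, (v, false))], 0) l) //.
    by rewrite pb_coef2; case: ifP; case: ifP => //; lia.
  rewrite /NP (_ : pb_coef _ l = pb_coef ([:: (-1, (v, true)); (-1, (v, false))], 0) l) //.
  by rewrite pb_coef2; case: ifP; case: ifP => //; lia.
rewrite e3 /acoef /mm; clear e1 e2 e3; case: l => w bb.
rewrite !xpair_eqE; case: (eqVneq w v) => [e|ne]; [subst w|]; rewrite ?eqxx ?(eq_sym v w) ?(negbTE ne) /=;
  case: bb => /=; lia.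
Qed.

Lemma bool_PP v : bool_axiom (PP v). Proof. by right; exists v; left. Qed.
Lemma bool_NP v : bool_axiom (NP v). Proof. by right; exists v; right. Qed.
Lemma bool_1 l : bool_axiom ([:: (1, l)], 0). Proof. by left; exists l; left. Qed.


Lemma loop V : forall P acc, Z0 \in P -> acc \in P ->
  exists L, cp_derivation P L /\ size L = (6 * size V)%N /\
   exists fin, fin \in P ++ L /\ fin.2 = acc.2 + \sum_(v <- V) mm v /\
   forall l, pb_coef fin l = pb_coef acc l + \sum_(v <- V) acoef v l.
Proof.
elim: V => [|v V IH] P acc z0 accP.
  exists [::]; split => //; split => //; exists acc; rewrite cats0; split => //.
  by rewrite big_nil addr0; split => // l; rewrite big_nil addr0.
set P6 := rcons (rcons (rcons (rcons (rcons (rcons P (x1 v)) (x2 v)) (x3 v)) (x4 v))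
   (atom v)) (pb_add acc (atom v)).
have subP : {subset P <= P6} by move=> y yP; rewrite /P6 -!cats1 -!catA mem_cat yP.
have accP6 : pb_add acc (atom v) \in P6 by rewrite /P6 mem_rcons mem_head.
have [L' [HL' [HS' [fin [fin_in [fin2 finc]]]]]] :=
  IH P6 (pb_add acc (atom v)) (subP _ z0) accP6.
exists [:: x1 v, x2 v, x3 v, x4 v, atom v, pb_add acc (atom v) & L']; split.
  apply: cp_derivation_cons.
    by apply: mul_ok => //; case: ifP => _; [apply: bool_PP|apply: bool_NP].
  apply: cp_derivation_cons.
    by apply: mul_ok; [apply: bool_1|rewrite -?cats1 -?catA ?mem_cat ?inE ?eqxx ?z0 ?accP ?orbT].
  apply: cp_derivation_cons.
    by apply: mul_ok; [apply: bool_1|rewrite -?cats1 -?catA ?mem_cat ?inE ?eqxx ?z0 ?accP ?orbT].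
  apply: cp_derivation_cons.
    by apply: add_ok; rewrite -?cats1 -?catA ?mem_cat ?inE ?eqxx ?z0 ?accP ?orbT.
  apply: cp_derivation_cons.
    by apply: add_ok; rewrite -?cats1 -?catA ?mem_cat ?inE ?eqxx ?z0 ?accP ?orbT.
  apply: cp_derivation_cons.
    by apply: add_ok; rewrite -?cats1 -?catA ?mem_cat ?inE ?eqxx ?z0 ?accP ?orbT.
  exact: HL'.
split; first by rewrite /= HS' mulnS.
exists fin; split.
  by move: fin_in; rewrite /P6 -!cats1 -!catA.
have e : (pb_add acc (atom v)).2 = acc.2 + mm v by rewrite -atom_deg.
split; first by rewrite fin2 e big_cons addrA.
by move=> l; rewrite finc pb_coef_add atom_coef big_cons addrA.
Qed.
End Loop.

Definition pbval (tau : assignment) (c : pbc) : int :=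
  \sum_(t <- c.1) t.1 * (nat_of_bool (eval_lit tau t.2))%:Z.

Lemma cp_derivation_cat P L1 L2 :
  cp_derivation P L1 -> cp_derivation (P ++ L1) L2 -> cp_derivation P (L1 ++ L2).
Proof.
move=> H1 H2 i; rewrite size_cat => hi.
case: (ltnP i (size L1)) => h.
  by rewrite nth_cat h take_cat h; apply: H1.
rewrite nth_cat ltnNge h /= take_cat ltnNge h /= catA.
apply: H2; rewrite -(ltn_add2l (size L1)) subnKC //.
Qed.

Lemma mul_ok3 P k a : a \in P -> Z0 \in P -> cp_rule P (pb_mul k a).
Proof.
move=> Ha z0; case: k => [|k]; last by apply: mul_ok2.
left; exists Z0; split; first by left.
split; first by rewrite /= mulr0.
by move=> l; rewrite pb_coef_mul mulr0 pb_coef_nil.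
Qed.

Lemma sum_pick (V : seq nat) x (F : nat -> int) : uniq V ->
  \sum_(v <- V) (if v == x then F v else 0) = if x \in V then F x else 0.
Proof.
elim: V => [|v V IH] /=; first by rewrite big_nil.
case/andP => vV uV; rewrite big_cons IH // inE.
case: (eqVneq v x) => [e|ne] /=; first by subst x; rewrite (negbTE vV) addr0.
by rewrite add0r.
Qed.

Lemma coef_bound ts (P : pred (int * lit)) :
  (`|(\sum_(t <- ts | P t) t.1)%R|%N <= \sum_(t <- ts) `|t.1|%N)%N.
Proof.
elim: ts => [|t ts IH]; first by rewrite !big_nil.
rewrite !big_cons; move: IH; case: (P t) => //; move: (\sum_(t <- ts | P t) t.1)%R (\sum_(t <- ts) `|t.1|%N)%N => X Y IH; lia.
Qed.

Lemma regroup tau ts (V : seq nat) : uniq V -> (forall t, t \in ts -> t.2.1 \in V) ->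
  \sum_(t <- ts) t.1 * (nat_of_bool (eval_lit tau t.2))%:Z =
  \sum_(v <- V) (if tau v then pb_coef (ts, 0) (v, true) else pb_coef (ts, 0) (v, false)).
Proof.
move=> uV; elim: ts => [|t ts IH] sub.
  by rewrite big_nil big1 // => v _; rewrite !pb_coef_nil; case: ifP.
rewrite big_cons IH; last by move=> u ut; apply: sub; rewrite inE ut orbT.
have tV : t.2.1 \in V := sub t (mem_head _ _).
clear sub IH; rewrite /pb_coef /=.
have -> : \sum_(v <- V) (if tau v then \sum_(t0 <- t :: ts | t0.2 == (v, true)) t0.1
                 else \sum_(t0 <- t :: ts | t0.2 == (v, false)) t0.1) =
  \sum_(v <- V) (if v == t.2.1 then t.1 * (nat_of_bool (eval_lit tau t.2))%:Z else 0) +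
  \sum_(v <- V) (if tau v then \sum_(t0 <- ts | t0.2 == (v, true)) t0.1
                 else \sum_(t0 <- ts | t0.2 == (v, false)) t0.1).
  rewrite -big_split /=; apply: eq_bigr => v _; rewrite !big_cons.
  case: t tV => a [w bb] tV /=; rewrite /eval_lit /= !xpair_eqE.
  case: (eqVneq v w) => [->|ne]; last first.
    by rewrite /= add0r; case: (tau v).
  by clear tV; rewrite ?eqxx /=; case: bb; case: (tau w) => /=; lia.
by rewrite sum_pick // tV.
Qed.

Lemma pb_coef_negenc C l : pb_coef (pb_neg (enc_clause C)) l = - (nat_of_bool (l \in C))%:Z.
Proof.
rewrite pb_neg_enc /negc /pb_coef big_map /= -(mem_undup C).
have : uniq (undup C) by apply: undup_uniq.
elim: (undup C) => [|x s IH]; first by rewrite big_nil.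
case/andP => xs us; rewrite big_cons IH // inE.
case: (eqVneq x l) => [<-|ne] /=; first by rewrite (negbTE xs); lia.
by [].
Qed.

Lemma size_undup_cat (s1 s2 : seq nat) :
  (size (undup (s1 ++ s2)) <= size s1 + size (undup s2))%N.
Proof.
rewrite -size_cat; apply: uniq_leq_size; first exact: undup_uniq.
by move=> x; rewrite mem_undup !mem_cat mem_undup.
Qed.

Lemma GL P C c : pb_neg (enc_clause C) \in P ->
  (forall l, l \in C -> negl l \notin C) ->
  (forall tau, extends_neg tau C -> c.2 <= pbval tau c) ->
  exists L, cp_derivation P L /\ cp_derives L c /\
    (size L <= 6 * (size c.1 + size (undup (map fst C))) + 6)%N.
Proof.
move=> inP consC valid.
set S : nat := (\sum_(t <- c.1) `|t.1|%N)%N.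
set M : nat := (2 * S).+1.
set a : nat -> int := fun v => pb_coef c (v, true).
set a' : nat -> int := fun v => pb_coef c (v, false).
set p : nat -> int := fun v => a v + (M * nat_of_bool ((v, true) \in C))%N%:Z.
set q : nat -> int := fun v => a' v + (M * nat_of_bool ((v, false) \in C))%N%:Z.
set V := undup (map (fun t => t.2.1) c.1 ++ map fst C).
have uV : uniq V by apply: undup_uniq.
set acc0 := pb_mul M (pb_neg (enc_clause C)).
set P1 := P ++ L0 ++ [:: acc0].
have z0 : Z0 \in P1 by rewrite /P1 !mem_cat -z3E !inE eqxx !orbT.
have a0 : acc0 \in P1 by rewrite /P1 !mem_cat mem_head !orbT.
have [L1 [HL1 [HS1 [fin0 [fin0_in [fin0_2 fin0_c]]]]]] := loop p q V z0 a0.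
set D := \sum_(v <- V) mm p q v.
set w := pb_mul (absz (D - c.2)%R) z2.
set fin := pb_add fin0 w.
exists (L0 ++ [:: acc0] ++ L1 ++ [:: w; fin]).
have bnd : forall v, (`|a v|%N <= S)%N /\ (`|a' v|%N <= S)%N.
  by move=> v; split; apply: coef_bound.
have tauE : forall v, mm p q v = if (p v <= q v) then a v else a' v.
  move=> v; have [b1 b2] := bnd v.
  rewrite /mm /p /q.
  case h1: ((v, true) \in C); case h2: ((v, false) \in C) => /=.
  - by move: (consC _ h1); rewrite /negl /= h2.
  - rewrite /M; case: leP => h; lia.
  - rewrite /M; case: leP => h; lia.
  - case: leP => h; lia.
have Dge : c.2 <= D.
  pose tau : assignment := fun v => p v <= q v.
  have ext : extends_neg tau C.
    move=> [v bb] lC; have [b1 b2] := bnd v.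
    rewrite /eval_lit /tau /p /q /=; case: bb lC => lC /=.
      have h2 : (v, false) \notin C by move: (consC _ lC).
      rewrite lC (negbTE h2) /M /=; apply: negbTE; apply/negP => h; lia.
    have h1 : (v, true) \notin C by move: (consC _ lC).
    rewrite lC (negbTE h1) /M /=; apply: negbF; apply/negP => h; lia.
  have := valid _ ext; rewrite /pbval (regroup tau uV).
    move=> h; apply: (le_trans h); rewrite /D le_eqVlt; apply/orP; left; apply/eqP.
    by apply: eq_bigr => v _; rewrite tauE.
  by move=> t tc; rewrite /V mem_undup mem_cat; apply/orP; left; apply/mapP; exists t.
split.
  apply: cp_derivation_cat; first exact: L0_deriv.
  apply: cp_derivation_cons; first by apply: mul_ok2; rewrite ?mem_cat ?inP.
  rewrite -cats1 -catA.
  apply: cp_derivation_cat; first exact: HL1.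
  apply: cp_derivation_cons.
    apply: mul_ok3; rewrite mem_cat; apply/orP; left; last exact: z0.
    by rewrite !mem_cat /L0 !inE eqxx !orbT.
  apply: cp_derivation_cons; last exact: cp_derivation_nil.
  apply: add_ok; last by rewrite mem_rcons mem_head.
  by rewrite mem_rcons inE; apply/orP; right; exact: fin0_in.
split.
  exists fin; split; first by rewrite !mem_cat !inE eqxx !orbT.
  split.
    rewrite /fin /= fin0_2 /acc0 /= /w /= /z2 /= -/D subrr mul0r add0r mulN1r gez0_abs ?subr_ge0 //; lra.
  move=> [v bb]; rewrite /fin pb_coef_add /w pb_coef_mul pb_coef_nil mul0r addr0.
  rewrite fin0_c /acc0 pb_coef_mul pb_coef_negenc.
  have -> : \sum_(v0 <- V) acoef p q v0 (v, bb) =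
            \sum_(v0 <- V) (if v0 == v then (if bb then p v0 else q v0) else 0).
    apply: eq_bigr => v0 _; rewrite /acoef !xpair_eqE.
    case: (eqVneq v0 v) => [e|ne] /=; last by [].
    by subst v0; case: bb.
  rewrite sum_pick //; case: ifP => vV.
    rewrite /p /q; case: bb => /=; [change (pb_coef c (v, true)) with (a v) | change (pb_coef c (v, false)) with (a' v)]; case: (_ \in C) => /=; lia.
  have nC : (v, bb) \notin C.
    apply/negP => h; move/negP: vV; apply; rewrite /V mem_undup mem_cat; apply/orP; right.
    by apply/mapP; exists (v, bb).
  have -> : pb_coef c (v, bb) = 0.
    rewrite /pb_coef big1_seq // => t /andP [/eqP e tc].
    move/negP: vV; case; rewrite /V mem_undup mem_cat; apply/orP; left.
    by apply/mapP; exists t => //; rewrite e.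
  rewrite (negbTE nC) /=; lia.
rewrite !size_cat /= HS1.
have := size_undup_cat (map (fun t => t.2.1) c.1) (map fst C).
rewrite size_map -/V /L0 /= => h.
rewrite (_ : (3 + (1 + (6 * size V + 2)))%N = 6 * size V + 6)%N; last by lia.
by rewrite leq_add2r leq_mul2l h orbT.
Qed.

Lemma subst_lit_true s x : subst_lit s (x, true) = s x.
Proof. by rewrite /subst_lit /=; case: (s x). Qed.

Definition ev tau (t : int * lit) : int := t.1 * (nat_of_bool (eval_lit tau t.2))%:Z.

Lemma obj_key b s tau :
  \sum_(t <- (restr_pb s (objective b)).1) ev tau t - (restr_pb s (objective b)).2 =
  (cost b (comp_assign tau s))%:Z.
Proof.
rewrite /cost /restr_pb /objective /= big_map.
elim: b => [|x b IH]; first by rewrite !big_nil /=; lia.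
rewrite /= big_cat /= !big_cons subst_lit_true /comp_assign /=.
move: IH; rewrite /comp_assign /ev /=.
set A := \sum_(i <- flatten _) _; set B := \sum_(j <- b) _; set N := (\sum_(i <- b) _)%N.
case: (s x) => [bb|l] /=; rewrite ?big_nil ?big_cons ?big_nil /=; [case: bb|case: (eval_lit tau l)] => /=; lia.
Qed.

Lemma obj_valid b s tau : (cost b (comp_assign tau s) <= cost b tau)%N ->
  (obj_con b s).2 <= pbval tau (obj_con b s).
Proof.
move=> hc.
have e1 : \sum_(t <- (objective b).1) ev tau t = (cost b tau)%:Z.
  rewrite /objective /cost /= big_map; elim: b {hc} => [|x b IH]; first by rewrite !big_nil.
  by rewrite !big_cons IH /ev /eval_lit /=; lia.
have K := obj_key b s tau.
set r := restr_pb s (objective b) in K *.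
have E : obj_con b s = ((objective b).1 ++ [seq (- t.1, t.2) | t <- r.1], - r.2) by [].
set O := (objective b).1 in E e1.
rewrite E; clearbody r O; rewrite /pbval big_cat big_map /=.
have e2 : \sum_(j <- r.1) - j.1 * (nat_of_bool (eval_lit tau j.2))%:Z
   = - \sum_(t <- r.1) ev tau t.
  by rewrite -sumrN; apply: eq_bigr => t _; rewrite /ev mulNr.
rewrite e2; move: e1; rewrite /ev => e1; rewrite e1; move: K; rewrite /ev; lia.
Qed.

Lemma restr_size s c : (size (restr_pb s c).1 <= size c.1)%N.
Proof.
case: c => ts d; rewrite /restr_pb /=; elim: ts => //= t ts IH.
by rewrite size_cat; case: subst_lit => /= [_|_]; lia.
Qed.

Lemma obj_size b s : (size (obj_con b s).1 <= 2 * size b)%N.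
Proof.
have := restr_size s (objective b).
rewrite /obj_con size_cat size_map /objective /= size_map; lia.
Qed.

Lemma enc_mem K E : E \in K -> enc_clause E \in enc_cnf K.
Proof. by move=> h; apply: map_f. Qed.

Lemma sr_step b G K D : {subset G <= K} -> {subset K <= G} ->
  cost_SR b G D -> (forall l, l \in D -> negl l \notin D) ->
  exists k, red_step b (enc_cnf K) (enc_clause D) k /\
    (k <= 6 * (2 * size b + size (undup (map fst D))) + 7)%N.
Proof.
move=> s1 s2 [s [Hup Hcost]] consD.
have [L [HL [HD HS]]] : exists L, cp_derivation (pb_neg (enc_clause D) :: enc_cnf K) L /\
    cp_derives L (obj_con b s) /\
    (size L <= 6 * (size (obj_con b s).1 + size (undup (map fst D))) + 6)%N.
  apply: GL => //; first exact: mem_head.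
  by move=> tau ext; apply: obj_valid; apply: Hcost.
exists (1 + size L)%N; split.
  apply: (red_step_of (s := s)); last by exists L.
  move=> d; rewrite mem_rcons inE => hd.
  have [E [-> EG]] : exists E, d = enc_clause E /\ E \in rcons G D.
    case/orP: hd => [/eqP ->|/mapP [E EK ->]]; first by exists D; rewrite mem_rcons mem_head.
    by exists E; rewrite mem_rcons inE (s2 _ EK) orbT.
  apply: sr_entry; first by move=> E0 /s1 /enc_mem.
  move=> E'' hE; apply: Hup; rewrite mem_pmap; apply/mapP; exists E => //.
have := obj_size b s; lia.
Qed.

Lemma size_lt_n (s : seq nat) n : uniq s -> (forall x, x \in s -> (x < n)%N) -> (size s <= n)%N.
Proof.
move=> us h; rewrite -(size_iota 0 n); apply: uniq_leq_size => // x /h.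
by rewrite mem_iota add0n.
Qed.

Lemma one_step b F prev K D n :
  {subset F ++ prev <= K} -> {subset K <= F ++ prev} ->
  csr_step b F prev D ->
  (forall x, x \in vars_clause D -> (x < n)%N) -> uniq b -> (forall x, x \in b -> (x < n)%N) ->
  exists k, pb_step b (enc_cnf K) (enc_clause D) k /\ (k <= 18 * n + 7)%N.
Proof.
move=> s1 s2 st vD ub vb.
have encK : forall E, E \in F ++ prev -> enc_clause E \in enc_cnf K.
  by move=> E /s1 /enc_mem.
case: st => [DF|[[E [Ep sub]]|[[E1 [E2 [h1 [h2 hr]]]]|[hsr _]]]].
- exists 1%N; split; last by lia.
  rewrite /pb_step; left; split => //; left; exists (enc_clause D).
  by split => //; left; apply: encK; rewrite mem_cat DF.
- exists 4%N; split; last by lia.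
  rewrite /pb_step; right; apply: id_step; apply: (rup_weak (E := E)) => //.
  by apply: encK; rewrite mem_cat Ep orbT.
- exists 4%N; split; last by lia.
  rewrite /pb_step; right; apply: id_step; apply: (rup_res (E1 := E1) (E2 := E2)) => //;
    by apply: encK; rewrite mem_cat ?h1 ?h2 orbT.
case: (boolP (has (fun l => negl l \in D) D)) => [/hasP [l lD nlD]|hn].
  exists 4%N; split; last by lia.
  by rewrite /pb_step; right; apply: id_step; apply: (@rup_taut D _ l).
have consD : forall l, l \in D -> negl l \notin D.
  by move=> l lD; apply/negP => h; move/hasP: hn; apply; exists l.
have [k [Hk Hb]] := sr_step s1 s2 hsr consD.
exists k; split; first by rewrite /pb_step; right.
have h1 := size_lt_n ub vb.
have h2 : (size (undup (map fst D)) <= n)%N.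
  by apply: size_lt_n; [apply: undup_uniq|move=> x; rewrite mem_undup; apply: vD].
lia.
Qed.

Lemma veripb_rcons b F st x : veripb_proof b F st ->
  pb_step b (enc_cnf F ++ map fst st) x.1 x.2 -> veripb_proof b F (rcons st x).
Proof.
move=> H Hx i; rewrite size_rcons ltnS leq_eqVlt => /orP [/eqP ->|hi].
  by rewrite nth_rcons ltnn eqxx -cats1 take_size_cat.
rewrite nth_rcons hi -cats1 takel_cat ?(ltnW hi) //.
exact: H.
Qed.

Lemma plen_rcons st x : proof_length (rcons st x) = (proof_length st + x.2)%N.
Proof. by rewrite /proof_length -cats1 map_cat sumn_cat /= addn0. Qed.

Close Scope ring_scope.

Lemma main_ind n F b Ds :
    uniq b -> (forall x, x \in b -> x < n) ->
    (forall D x, D \in Ds -> x \in vars_clause D -> x < n) ->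
    csr_derivation b F Ds ->
  forall j, j <= size Ds ->
  exists st NS, [/\ veripb_proof b F st, map fst st = enc_cnf NS,
     {subset NS <= take j Ds}, {subset take j Ds <= F ++ NS} &
     [/\ uniq NS, proof_length st <= size NS * (18 * n + 7) & size NS <= j]].
Proof.
move=> ub vb vD der; elim => [|j IH] hj.
  exists [::], [::]; split => //; by move=> x; rewrite take0.
have [st [NS [Hv Hm s1 s2 [uN Hl Hs]]]] := IH (ltnW hj).
have tk : take j.+1 Ds = rcons (take j Ds) (nth [::] Ds j) by rewrite (take_nth [::] hj).
set D := nth [::] Ds j.
case: (boolP (D \in F ++ take j Ds)) => [Din|Dnin].
  exists st, NS; split => //.
  - by move=> x /s1; rewrite tk mem_rcons inE orbC => ->.
  - move=> x; rewrite tk mem_rcons inE => /orP [/eqP ->|]; last exact: s2.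
    move: Din; rewrite mem_cat => /orP [h|/s2 //]; by rewrite mem_cat h.
  - by split => //; apply: leqW.
have vDD : forall x, x \in vars_clause D -> x < n.
  by move=> x; apply: vD; apply: mem_nth.
have ss1 : {subset F ++ take j Ds <= F ++ NS}.
  by move=> x; rewrite mem_cat => /orP [h|/s2 //]; rewrite mem_cat h.
have ss2 : {subset F ++ NS <= F ++ take j Ds}.
  by move=> x; rewrite !mem_cat => /orP [->//|/s1 ->]; rewrite orbT.
have [k [Hk Hkb]] := one_step ss1 ss2 (der j hj) vDD ub vb.
exists (rcons st (enc_clause D, k)), (rcons NS D); split.
- apply: veripb_rcons => //=; by rewrite Hm -map_cat.
- by rewrite map_rcons Hm /enc_cnf map_rcons.
- by move=> x; rewrite tk !mem_rcons !inE => /orP [->//|/s1 ->]; rewrite orbT.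
- move=> x; rewrite tk mem_rcons inE => /orP [/eqP ->|/s2].
    by rewrite mem_cat mem_rcons mem_head orbT.
  by rewrite !mem_cat mem_rcons inE => /orP [->//|->]; rewrite !orbT.
split.
- rewrite rcons_uniq uN andbT; apply/negP => /s1 h; move/negP: Dnin; apply.
  by rewrite mem_cat h orbT.
- by rewrite plen_rcons size_rcons /= mulSn; lia.
- by rewrite size_rcons.
Qed.

Theorem proposition3p10 :
  exists c : nat,
  forall (n : nat) (F : cnf) (b : seq nat) (Ds : seq clause),
    (forall x, x \in vars_cnf F -> x < n) ->
    uniq b -> (forall x, x \in b -> x < n) ->
    (forall D x, D \in Ds -> x \in vars_clause D -> x < n) ->
    csr_derivation b F Ds ->
    exists steps : seq (pbc * nat),
      veripb_proof b F steps /\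
      proof_length steps <= c * (n * size Ds).+1 ^ c /\
      (forall C, C \in F ++ Ds ->
         exists a, a \in proof_result F steps /\ pb_equiv a (enc_clause C)).
Proof.
exists 25 => n F b Ds _ ub vb vD der.
have [st [NS [Hv Hm s1 s2 [uN Hl Hs]]]] := main_ind ub vb vD der (leqnn (size Ds)).
rewrite take_size in s1 s2.
exists st; split => //; split; last first.
  move=> C /(fun h => h) hC; exists (enc_clause C); split => //.
  rewrite /proof_result Hm -map_cat; apply: map_f.
  move: hC; rewrite mem_cat => /orP [h|/s2 //]; by rewrite mem_cat h.
apply: (leq_trans Hl).
case: n vD vb Hl => [|n] vD vb Hl.
  have e : forall D, D \in NS -> D = [::].
    move=> D /s1 DD; case: D DD => // l D' DD.
    by have := vD _ l.1 DD (mem_head _ _).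
  have : size NS <= 1.
    rewrite (_ : 1 = size [:: [::] : clause]) //; apply: uniq_leq_size => // x /e ->.
    exact: mem_head.
  rewrite mul0n exp1n muln1; lia.
have Hs' : size NS <= size Ds by [].
apply: (@leq_trans (size Ds * (25 * n.+1))).
  by apply: leq_mul => //; lia.
rewrite mulnC -mulnA leq_mul2l /=.
apply: (@leq_trans (n.+1 * size Ds).+1) => //.
by rewrite -{1}(expn1 (n.+1 * size Ds).+1) leq_pexp2l.
Qed.
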